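(* If $G$ is a simple graph whose vertices are among the variables of $S=\mathbb{K}[x_1,\dots,x_n]$, $\mathbb{K}$ a field, then $\operatorname{sreg}(S/I(G))\le\operatorname{box}(\overline{G})$.
   Context: $\overline{G}$ is the complement graph of $G$. The boxicity $\operatorname{box}(H)$ of a graph $H$ is the minimum $k$ such that $H$ is the intersection graph of a family of axis-parallel boxes in $\mathbb{R}^k$; equivalently, it is the smallest number of co-interval spanning subgraphs of $\overline{H}$ whose edge sets cover $E(\overline{H})$ (an interval graph is an intersection graph of intervals on the real line; a co-interval graph is the complement of an interval graph). $I(G)=(xy : \{x,y\}\in E(G))$ is the edge ideal. Stanley regularity: for a squarefree monomial ideal $I\subset S$, a squarefree Stanley decomposition of $S/I$ is a decomposition $S/I=\bigoplus_{i=1}^r u_i\mathbb{K}[Z_i]$ as $\mathbb{K}$-vector spaces, where $Z_i\subseteq\{x_1,\dots,x_n\}$, $u_i$ are (images of) squarefree monomials with $\operatorname{supp}(u_i)\subseteq Z_i$, and each $u_i\mathbb{K}[Z_i]$ is free over $\mathbb{K}[Z_i]$. Its Stanley regularity is $\max_i\deg(u_i)$, and $\operatorname{sreg}(S/I)$ is the minimum over all such decompositions. *)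

(* Defs.v *)
From HB Require Import structures.
From mathcomp Require Import all_boot all_order all_algebra.
From mathcomp Require Import multinomials.mpoly.
From Stdlib Require Rdefinitions Rbasic_fun.

Set Implicit Arguments.
Unset Strict Implicit.
Unset Printing Implicit Defensive.

Import GRing.Theory.
Local Open Scope ring_scope.

Record simple_graph (n : nat) := SimpleGraph {
  gV : {set 'I_n};
  gE : rel 'I_n;
  gE_sym : ssrbool.symmetric gE;
  gE_irr : irreflexive gE;
  gE_sub : forall u v, gE u v -> (u \in gV) && (v \in gV)
}.

Definition compl_adj n (G : simple_graph n) (u v : 'I_n) : bool :=
  [&& u \in gV G, v \in gV G, u != v & ~~ gE G u v].

(* H (given by vertex set V and adjacency adj) is the intersection graph of a
   family of closed axis-parallel boxes in R^k:
   box of v = prod_j [l v j, r v j]. Two boxes intersect iff for every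
   coordinate j, max (l u j) (l v j) <= min (r u j) (r v j). *)
Definition box_representable n (V : {set 'I_n}) (adj : rel 'I_n) (k : nat) : Prop :=
  exists l r : 'I_n -> 'I_k -> Rdefinitions.R,
    (forall v j, Rdefinitions.Rle (l v j) (r v j)) /\
    (forall u v, u \in V -> v \in V -> u != v ->
       (adj u v <-> forall j, Rdefinitions.Rle (Rbasic_fun.Rmax (l u j) (l v j)) (Rbasic_fun.Rmin (r u j) (r v j)))).

Definition boxicity_le n (V : {set 'I_n}) (adj : rel 'I_n) (k : nat) : Prop :=
  exists k', (k' <= k)%N /\ box_representable V adj k'.

Definition sqfree_mon (K : fieldType) n (U : {set 'I_n}) : {mpoly K[n]} :=
  \prod_(i in U) 'X_i.

(* Membership in the subring K[Z] (polynomials in the variables of Z only). *)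
Definition in_subring (K : fieldType) n (Z : {set 'I_n}) (p : {mpoly K[n]}) : Prop :=
  forall m, m \in msupp p -> forall i : 'I_n, i \notin Z -> m i = 0%N.

Definition in_edge_ideal (K : fieldType) n (G : simple_graph n) (f : {mpoly K[n]}) : Prop :=
  exists g : 'I_n -> 'I_n -> {mpoly K[n]},
    f = \sum_(u : 'I_n) \sum_(v : 'I_n | gE G u v) g u v * 'X_u * 'X_v.

(* A squarefree Stanley decomposition S/I(G) = (+)_i u_i K[Z_i], given as a
   list of pairs (U_i, Z_i) with u_i = prod_{x in U_i} x and U_i \subset Z_i.
   The condition "S/I = (+)_i u_i K[Z_i] as K-vector spaces with each
   u_i K[Z_i] free over K[Z_i]" is stated in S: every f in S can be written
   as f = g + sum_i u_i h_i with g in I and h_i in K[Z_i], and uniquely so. *)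
Definition stanley_decomposition (K : fieldType) n (G : simple_graph n)
    (D : seq ({set 'I_n} * {set 'I_n})) : Prop :=
  (forall p, p \in D -> p.1 \subset p.2) /\
  (forall f : {mpoly K[n]}, exists (g : {mpoly K[n]}) (h : 'I_(size D) -> {mpoly K[n]}),
     [/\ in_edge_ideal G g,
         forall i : 'I_(size D), in_subring (nth (set0, set0) D i).2 (h i)
       & f = g + \sum_(i < size D) sqfree_mon K (nth (set0, set0) D i).1 * h i]) /\
  (forall (g g' : {mpoly K[n]}) (h h' : 'I_(size D) -> {mpoly K[n]}),
     in_edge_ideal G g -> in_edge_ideal G g' ->
     (forall i : 'I_(size D), in_subring (nth (set0, set0) D i).2 (h i)) ->
     (forall i : 'I_(size D), in_subring (nth (set0, set0) D i).2 (h' i)) ->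
     g + \sum_(i < size D) sqfree_mon K (nth (set0, set0) D i).1 * h i =
     g' + \sum_(i < size D) sqfree_mon K (nth (set0, set0) D i).1 * h' i ->
     g = g' /\ forall i : 'I_(size D), h i = h' i).

(* Stanley regularity of a decomposition: max_i deg(u_i) = max_i |U_i|. *)
Definition stanley_reg n (D : seq ({set 'I_n} * {set 'I_n})) : nat :=
  \max_(p <- D) #|p.1|.

(* sreg(S/I(G)) <= k  (sreg is the minimum over all decompositions). *)
Definition sreg_le (K : fieldType) n (G : simple_graph n) (k : nat) : Prop :=
  exists D, stanley_decomposition K G D /\ (stanley_reg D <= k)%N.

(* Main.v *)
Require Import Defs.
From mathcomp Require Import all_boot all_order all_algebra.
From mathcomp Require Import multinomials.mpoly.
Set Implicit Arguments. Unset Strict Implicit. Unset Printing Implicit Defensive.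
Import GRing.Theory.

Module Alg.
Local Open Scope ring_scope.

Section Alg.
Variables (K : fieldType) (n : nat) (G : simple_graph n).

Definition supp (m : 'X_{1..n}) : {set 'I_n} := [set i | m i != 0%N].
Definition mS (U : {set 'I_n}) : 'X_{1..n} := [multinom ((i \in U) : nat) | i < n].
Definition indep (A : {set 'I_n}) : bool :=
  [forall u, forall v, ((u \in A) && (v \in A)) ==> ~~ gE G u v].

Lemma indepP A u v : indep A -> u \in A -> v \in A -> ~~ gE G u v.
Proof. by move=> /forallP /(_ u) /forallP /(_ v) /implyP H Hu Hv; apply: H; rewrite Hu Hv. Qed.

Lemma indep_sub (A B : {set 'I_n}) : A \subset B -> indep B -> indep A.
Proof.
move=> /subsetP sAB iB; apply/forallP => u; apply/forallP => v; apply/implyP => /andP[Hu Hv].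
by apply: (indepP iB); apply: sAB.
Qed.

Lemma sqfree_monE U : sqfree_mon K U = 'X_[mS U].
Proof.
rewrite /sqfree_mon mpolyXE_id big_mkcond /=; apply: eq_bigr => i _.
by rewrite mnmE; case: (i \in U); rewrite ?expr1 ?expr0.
Qed.

Lemma coefMX (q : {mpoly K[n]}) w m :
  (q * 'X_[w])@_m = if (w <= m)%MM then q@_(m - w) else 0.
Proof.
case: ifP => hw.
  by rewrite -{1}(submK hw) addmC mcoeffMX.
apply: memN_msupp_eq0; rewrite (perm_mem (msuppMX q w)).
apply/negP => /mapP [m' _ Em]; by rewrite Em lem_addr in hw.
Qed.

Lemma ideal_vanish (g : {mpoly K[n]}) m : in_edge_ideal G g -> indep (supp m) -> g@_m = 0.
Proof.
move=> [gg ->] im; rewrite raddf_sum; apply: big1 => u _.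
rewrite raddf_sum; apply: big1 => v Euv.
rewrite -mulrA -mpolyXD; apply: (etrans (coefMX _ _ _)); case: ifP => // /mnm_lepP H.
have Hu := H u; have Hv := H v.
rewrite !mnmDE !mnm1E eqxx in Hu Hv.
have Hu' : u \in supp m by rewrite inE -lt0n; apply: leq_trans _ Hu; case: (v == u).
have Hv' : v \in supp m by rewrite inE -lt0n; apply: leq_trans _ Hv; rewrite eqxx; case: (u == v).
by have := indepP im Hu' Hv'; rewrite Euv.
Qed.

Lemma ideal0 : in_edge_ideal G (0 : {mpoly K[n]}).
Proof.
exists (fun _ _ => 0); symmetry; apply: big1 => u _; apply: big1 => v _.
by rewrite !mul0r.
Qed.

Lemma idealD (g1 g2 : {mpoly K[n]}) :
  in_edge_ideal G g1 -> in_edge_ideal G g2 -> in_edge_ideal G (g1 + g2).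
Proof.
move=> [a ->] [b ->]; exists (fun u v => a u v + b u v).
rewrite -big_split /=; apply: eq_bigr => u _; rewrite -big_split /=.
by apply: eq_bigr => v _; rewrite !mulrDl.
Qed.

Lemma idealX (q : {mpoly K[n]}) u v : gE G u v -> in_edge_ideal G (q * 'X_u * 'X_v).
Proof.
move=> Euv; exists (fun a b => if (a == u) && (b == v) then q else 0).
rewrite (bigD1 u) //= (bigD1 v) //= !eqxx /= big1 ?addr0; last first.
  by move=> b /andP[_ /negbTE ->]; rewrite !mul0r.
rewrite big1 ?addr0 // => a /negbTE au; apply: big1 => b _.
by rewrite au !mul0r.
Qed.

Lemma subringD (Z : {set 'I_n}) (p q : {mpoly K[n]}) :
  in_subring Z p -> in_subring Z q -> in_subring Z (p + q).
Proof.
move=> hp hq m /msuppD_le; rewrite mem_cat => /orP[] /[dup] H;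
  [exact: hp | exact: hq].
Qed.

Lemma subringB (Z : {set 'I_n}) (p q : {mpoly K[n]}) :
  in_subring Z p -> in_subring Z q -> in_subring Z (p - q).
Proof.
move=> hp hq m /msuppB_le; rewrite mem_cat => /orP[] /[dup] H;
  [exact: hp | exact: hq].
Qed.

Lemma subring0 (Z : {set 'I_n}) : in_subring Z (0 : {mpoly K[n]}).
Proof. by move=> m; rewrite mcoeff_msupp mcoeff0 eqxx. Qed.

Lemma sq_coef_supp (U Z : {set 'I_n}) (h : {mpoly K[n]}) m :
  U \subset Z -> in_subring Z h -> (sqfree_mon K U * h)@_m != 0 ->
  (U \subset supp m) && (supp m \subset Z).
Proof.
move=> /subsetP UZ hZ; rewrite sqfree_monE mulrC coefMX.
case: ifP => [/mnm_lepP le|]; last by rewrite eqxx.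
rewrite -mcoeff_msupp => /hZ hm; apply/andP; split; apply/subsetP => i.
  move=> iU; have := le i; rewrite mnmE iU inE -lt0n; exact.
rewrite inE; apply: contraR => iZ.
have := hm i iZ; rewrite mnmBE mnmE.
have -> : (i \in U) = false by apply/negP => /UZ; rewrite (negbTE iZ).
by rewrite subn0 => ->.
Qed.

Lemma sq_coef_at (U : {set 'I_n}) (h : {mpoly K[n]}) m :
  (sqfree_mon K U * h)@_(mS U + m) = h@_m.
Proof. by rewrite sqfree_monE mulrC mcoeffMX. Qed.


Definition inI (p : {set 'I_n} * {set 'I_n}) (A : {set 'I_n}) :=
  (p.1 \subset A) && (A \subset p.2).

Lemma stanley_of_partition (D : seq ({set 'I_n} * {set 'I_n})) :
  (forall p, p \in D -> p.1 \subset p.2) ->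
  (forall p, p \in D -> indep p.2) ->
  (forall A, indep A -> exists2 p, p \in D & inI p A) ->
  (forall A p q, p \in D -> q \in D -> inI p A -> inI q A -> p = q) ->
  uniq D -> stanley_decomposition K G D.
Proof.
move=> H1 H2 H3 H4 uD.
set x0 := (set0, set0) : {set 'I_n} * {set 'I_n}.
have memD (i : 'I_(size D)) : nth x0 D i \in D by apply: mem_nth.
split; first exact: H1.
split.
  move=> f.
  pose P (f : {mpoly K[n]}) := exists (g : {mpoly K[n]}) (h : 'I_(size D) -> {mpoly K[n]}),
     [/\ in_edge_ideal G g,
         forall i : 'I_(size D), in_subring (nth x0 D i).2 (h i)
       & f = g + \sum_(i < size D) sqfree_mon K (nth x0 D i).1 * h i].
  have P0 : P 0.
    exists 0, (fun _ => 0); split; [exact: ideal0| move=> i; exact: subring0|].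
    by rewrite add0r big1 // => i _; rewrite mulr0.
  have PD f1 f2 : P f1 -> P f2 -> P (f1 + f2).
    move=> [g1 [h1 [i1 s1 ->]]] [g2 [h2 [i2 s2 ->]]].
    exists (g1 + g2), (fun i => h1 i + h2 i); split.
    - exact: idealD.
    - by move=> i; apply: subringD.
    by rewrite addrACA -big_split /=; congr (_ + _); apply: eq_bigr => i _; rewrite mulrDr.
  have PX c m : P (c *: 'X_[m]).
    case: (boolP (indep (supp m))) => im.
      have [p pD /andP[p1 p2]] := H3 _ im.
      have iD : (index p D < size D)%N by rewrite index_mem.
      pose i := Ordinal iD.
      have Ei : nth x0 D i = p by rewrite /= nth_index.
      have le : (mS p.1 <= m)%MM.
        apply/mnm_lepP => j; rewrite mnmE; case: (boolP (j \in p.1)) => /= [/(subsetP p1)|]; last by [].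
        by rewrite inE lt0n.
      exists 0, (fun j => if j == i then c *: 'X_[m - mS p.1] else 0); split.
      - exact: ideal0.
      - move=> j; case: ifP => [/eqP ->|_]; last exact: subring0.
        rewrite Ei => m' /msuppZ_le; rewrite msuppX mem_seq1 => /eqP -> j' j'Z.
        rewrite mnmBE.
        have : j' \notin supp m by apply: contra j'Z; apply: (subsetP p2).
        by rewrite inE negbK => /eqP ->.
      rewrite add0r (bigD1 i) //= eqxx big1 ?addr0; last first.
        by move=> j /negbTE ->; rewrite mulr0.
      by rewrite Ei sqfree_monE -scalerAr -mpolyXD addmC submK.
    have : ~~ [forall u, forall v, ((u \in supp m) && (v \in supp m)) ==> ~~ gE G u v] by [].
    move=> /forallPn [u /forallPn [v]]; rewrite negb_imply negbK => /andP[/andP[uS vS] Euv].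
    have uv : u != v by apply: contraTneq Euv => ->; rewrite (gE_irr G).
    have le : ((U_(u) + U_(v)) <= m)%MM.
      apply/mnm_lepP => j; rewrite mnmDE !mnm1E.
      move: uS vS; rewrite !inE -!lt0n => uS vS.
      case: (eqVneq u j) => uj; case: (eqVneq v j) => vj /=; subst => //.
      by rewrite eqxx in uv.
    exists (c *: 'X_[m]), (fun _ => 0); split.
    - rewrite -(submK le) mpolyXD mpolyXD mulrA !scalerAl.
      exact: idealX.
    - move=> i; exact: subring0.
    by rewrite big1 ?addr0 // => i _; rewrite mulr0.
  suff Pf : P f by exact: Pf.
  rewrite (mpolyE f); apply: (big_ind P) => // m _; exact: PX.
move=> g g' h h' Ig Ig' Sh Sh' E.
have F1 (i : 'I_(size D)) (k : {mpoly K[n]}) m : in_subring (nth x0 D i).2 k ->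
    (sqfree_mon K (nth x0 D i).1 * k)@_m != 0 -> inI (nth x0 D i) (supp m).
  by move=> Sk; apply: sq_coef_supp => //; apply: H1.
have F2 (i j : 'I_(size D)) A : inI (nth x0 D i) A -> inI (nth x0 D j) A -> i = j.
  move=> Ii Ij; have := H4 _ _ _ (memD i) (memD j) Ii Ij.
  by move/eqP; rewrite nth_uniq // => /eqP /val_inj.
pose k i := h' i - h i.
have Sk (i : 'I_(size D)) : in_subring (nth x0 D i).2 (k i) by apply: subringB.
have E2 : g - g' = \sum_(i < size D) sqfree_mon K (nth x0 D i).1 * k i.
  rewrite /k; under eq_bigr => i _ do rewrite mulrBr.
  rewrite sumrB; apply/eqP; rewrite subr_eq addrAC eq_sym subr_eq E addrC //.
have gg : g = g'.
  apply/eqP; rewrite -subr_eq0; apply/eqP/mpolyP => m; rewrite mcoeff0.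
  case: (boolP (indep (supp m))) => im.
    by rewrite mcoeffB (ideal_vanish Ig im) (ideal_vanish Ig' im) subrr.
  rewrite E2 raddf_sum big1 // => i _; apply/eqP; apply: contraR im => nz.
  have /andP[_ sZ] := F1 _ _ _ (Sk i) nz.
  exact: (indep_sub sZ (H2 _ (memD i))).
split => // i.
have E3 : \sum_(i < size D) sqfree_mon K (nth x0 D i).1 * k i = 0 by rewrite -E2 gg subrr.
suff : k i = 0 by move/eqP; rewrite subr_eq0 => /eqP.
apply/mpolyP => m'; rewrite mcoeff0; apply/eqP; apply: contraT => nz.
have := congr1 (mcoeff (mS (nth x0 D i).1 + m')) E3.
rewrite mcoeff0 raddf_sum (bigD1 i) //= big1 ?addr0.
  by rewrite sq_coef_at => /eqP; rewrite (negbTE nz).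
move=> j ji; apply/eqP; apply: contraR ji => nzj.
have Ij := F1 _ _ _ (Sk j) nzj.
have Ii : inI (nth x0 D i) (supp (mS (nth x0 D i).1 + m')).
  apply: F1 (Sk i) _; by rewrite sq_coef_at.
by rewrite (F2 _ _ _ Ij Ii).
Qed.

End Alg.
End Alg.
Import Alg.
From Stdlib Require Import Rdefinitions Rbasic_fun RIneq Lra.


Definition Rltb (x y : R) : bool := if Rlt_dec x y then true else false.
Definition Rleb (x y : R) : bool := if Rle_dec x y then true else false.
Lemma RltbP x y : reflect (Rlt x y) (Rltb x y).
Proof. rewrite /Rltb; case: Rlt_dec => h; by constructor. Qed.
Lemma RlebP x y : reflect (Rle x y) (Rleb x y).
Proof. rewrite /Rleb; case: Rle_dec => h; by constructor. Qed.

Section Comb.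
Variables (n k : nat) (G : simple_graph n) (l r : 'I_n -> 'I_k -> R).
Hypothesis Hlr : forall v j, Rle (l v j) (r v j).
Hypothesis Hbox : forall u v, u \in gV G -> v \in gV G -> u != v ->
  (compl_adj G u v <-> forall j, Rle (Rmax (l u j) (l v j)) (Rmin (r u j) (r v j))).

Local Notation V := (gV G).

Definition ltj j (a b : 'I_n) : bool :=
  Rltb (r a j) (r b j) || (Rleb (r a j) (r b j) && (a < b)%N).

Lemma ltj_irr j a : ltj j a a = false.
Proof. rewrite /ltj ltnn andbF orbF; apply/RltbP => h; lra. Qed.

Lemma ltj_trans j a b c : ltj j a b -> ltj j b c -> ltj j a c.
Proof.
rewrite /ltj => /orP[/RltbP h1|/andP[/RlebP h1 h1']] /orP[/RltbP h2|/andP[/RlebP h2 h2']].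
- by apply/orP; left; apply/RltbP; lra.
- by apply/orP; left; apply/RltbP; lra.
- by apply/orP; left; apply/RltbP; lra.
case: (RltbP (r a j) (r c j)) => // h.
by rewrite /=; apply/andP; split; [apply/RlebP; lra| apply: ltn_trans h1' h2'].
Qed.

Lemma ltj_total j a b : a != b -> ltj j a b || ltj j b a.
Proof.
move=> ab; rewrite /ltj.
case: (RltbP (r a j) (r b j)) => //= h1.
case: (RltbP (r b j) (r a j)) => h2; rewrite ?orbT //=.
have e : r a j = r b j by apply: Rle_antisym; apply: Rnot_lt_le.
rewrite e; have -> : Rleb (r b j) (r b j) by apply/RlebP; lra.
rewrite /=; case: (ltngtP a b) => // /val_inj e'; by rewrite e' eqxx in ab.
Qed.

Definition kap j (a : 'I_n) := #|[set b | ltj j b a]|.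

Lemma kap_lt j a b : ltj j a b -> (kap j a < kap j b)%N.
Proof.
move=> ab; apply: proper_card; apply/properP; split.
  by apply/subsetP => c; rewrite !inE => ca; apply: ltj_trans ca ab.
by exists a; rewrite !inE ?ab ?ltj_irr.
Qed.

Lemma kap_anti j a b : (kap j a <= kap j b)%N -> (kap j b <= kap j a)%N -> a = b.
Proof.
move=> h1 h2; apply/eqP; apply: contraT => ab.
case/orP: (ltj_total j ab) => /kap_lt; rewrite ltnNge ?h1 ?h2 //.
Qed.

Lemma kap_le j a b : (kap j a <= kap j b)%N -> Rle (r a j) (r b j).
Proof.
move=> h; case: (eqVneq a b) => [->|ab]; first lra.
case/orP: (ltj_total j ab) => [|/kap_lt]; last by rewrite ltnNge h.
by rewrite /ltj => /orP[/RltbP|/andP[/RlebP ? _]]; lra.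
Qed.

Definition mu j (A : {set 'I_n}) : option 'I_n :=
  [pick t in A :&: V | [forall w in A :&: V, (kap j t <= kap j w)%N]].

Lemma mu_some j A t : mu j A = Some t ->
  t \in A :&: V /\ forall w, w \in A :&: V -> (kap j t <= kap j w)%N.
Proof.
rewrite /mu; case: pickP => // t' /andP[H1 /forall_inP H2] [<-]; by split.
Qed.

Lemma mu_someI j A t : t \in A :&: V -> (forall w, w \in A :&: V -> (kap j t <= kap j w)%N) ->
  mu j A = Some t.
Proof.
move=> Ht Hm; rewrite /mu; case: pickP => [t' /andP[Ht' /forall_inP H']|].
  by congr Some; apply: kap_anti; [apply: H' | apply: Hm].
by move/(_ t); rewrite Ht /=; move/negbT/negP; case; apply/forall_inP.
Qed.

Lemma mu_none j A w : mu j A = None -> w \in A :&: V -> False.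
Proof.
move=> E Hw.
case: (arg_minnP (kap j) Hw) => t Ht Hm.
by rewrite (mu_someI Ht Hm) in E.
Qed.

Lemma mu_noneI j A : (forall w, w \in A :&: V -> False) -> mu j A = None.
Proof. by move=> H; rewrite /mu; case: pickP => // t /andP[/H]. Qed.

Definition rho (A : {set 'I_n}) : {set 'I_n} := [set t in pmap (fun j => mu j A) (enum 'I_k)].

Lemma rhoP A t : reflect (exists j, mu j A = Some t) (t \in rho A).
Proof.
rewrite inE mem_pmap; apply: (iffP mapP) => [[j _ E]|[j E]]; first by exists j.
by exists j; rewrite ?mem_enum.
Qed.

Lemma rho_eq A B : (forall j, mu j A = mu j B) -> rho A = rho B.
Proof. by move=> H; apply/setP => t; rewrite !inE (eq_pmap H). Qed.

Lemma card_rho A : (#|rho A| <= k)%N.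
Proof.
rewrite cardsE; apply: leq_trans (card_size _) _.
by rewrite size_pmap; apply: leq_trans (count_size _ _) _; rewrite size_enum_ord.
Qed.

Lemma rho_sub A : rho A \subset A.
Proof.
apply/subsetP => t /rhoP [j /mu_some [/setIP [] ? _ _]] //.
Qed.

Lemma mu_sub j (A B : {set 'I_n}) t : mu j A = Some t -> B \subset A -> t \in B -> mu j B = Some t.
Proof.
move=> /mu_some [/setIP [tA tV] Hm] BA tB; apply: mu_someI; first by rewrite inE tB.
by move=> w /setIP [wB wV]; apply: Hm; rewrite inE (subsetP BA) ?wV.
Qed.

Lemma mu_rho j A : mu j (rho A) = mu j A.
Proof.
case E: (mu j A) => [t|].
  by apply: (mu_sub E (rho_sub A)); apply/rhoP; exists j.
apply: mu_noneI => w /setIP [/(subsetP (rho_sub A)) wA wV].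
by apply: (@mu_none j A w E); rewrite inE wA.
Qed.

Lemma rho_idem A : rho (rho A) = rho A.
Proof. apply: rho_eq => j; exact: mu_rho. Qed.

Lemma box_meet j w t : w \in V -> t \in V -> ~~ gE G w t -> Rle (l w j) (r t j).
Proof.
move=> wV tV nE; case: (eqVneq w t) => [->|wt]; first exact: Hlr.
have [H _] := Hbox wV tV wt.
have := H ltac:(by rewrite /compl_adj wV tV wt nE) j.
have := Rmax_l (l w j) (l t j); have := Rmin_r (r w j) (r t j); lra.
Qed.

Definition Zs (U : {set 'I_n}) : {set 'I_n} :=
  [set w | (w \notin V) || [forall j, if mu j U is Some t then
       Rleb (l w j) (r t j) && (kap j t <= kap j w)%N else false]].

Lemma K4 A : indep G A -> A \subset Zs (rho A).
Proof.
move=> iA; apply/subsetP => w wA; rewrite inE; case: (boolP (w \in V)) => //= wV.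
apply/forallP => j; rewrite mu_rho.
case E: (mu j A) => [t|]; last by case: (@mu_none j A w E); rewrite inE wA.
have [/setIP [tA tV] Hm] := mu_some E.
apply/andP; split; last by apply: Hm; rewrite inE wA.
by apply/RlebP; apply: box_meet => //; apply: (indepP iA).
Qed.

Lemma K5 U : indep G (Zs U).
Proof.
apply/forallP => w; apply/forallP => w'; apply/implyP => /andP[].
rewrite !inE => Hw Hw'; apply/negP => E.
have /andP[wV w'V] := gE_sub E.
rewrite wV w'V /= in Hw Hw'.
have ww : w != w' by apply: contraTneq E => ->; rewrite (gE_irr G).
have [_ H] := Hbox wV w'V ww.
have : compl_adj G w w'.
  apply: H => j; move: Hw Hw' => /forallP /(_ j) Hw /forallP /(_ j) Hw'.
  case E1: (mu j U) Hw Hw' => [t|] // /andP[/RlebP h1 /kap_le h2] /andP[/RlebP h3 /kap_le h4].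
  apply: Rmax_lub; apply: Rmin_glb; try apply: Hlr; lra.
by rewrite /compl_adj E /= !andbF.
Qed.

Lemma K6 (U A : {set 'I_n}) : rho U = U -> U \subset A -> A \subset Zs U -> rho A = U.
Proof.
move=> rU UA AZ; rewrite -[RHS]rU; apply: rho_eq => j.
case E: (mu j U) => [t|].
  have [/setIP [tU tV] _] := mu_some E.
  apply: mu_someI; first by rewrite inE (subsetP UA).
  move=> w /setIP [wA wV]; have := subsetP AZ w wA; rewrite inE wV /=.
  by move/forallP/(_ j); rewrite E => /andP[].
apply: mu_noneI => w /setIP [wA wV]; have := subsetP AZ w wA; rewrite inE wV /=.
by move/forallP/(_ j); rewrite E.
Qed.

Definition Dlist : seq ({set 'I_n} * {set 'I_n}) :=
  [seq (U, Zs U) | U <- enum [set U : {set 'I_n} | indep G U && (rho U == U)]].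

Lemma Dlist_ok (K : fieldType) : stanley_decomposition K G Dlist /\ (stanley_reg Dlist <= k)%N.
Proof.
have memD p : p \in Dlist -> exists U, [/\ p = (U, Zs U), indep G U & rho U = U].
  by case/mapP => U; rewrite mem_enum inE => /andP[iU /eqP rU] ->; exists U.
split.
  apply: stanley_of_partition.
  - by move=> p /memD [U [-> iU rU]] /=; have := K4 iU; rewrite rU.
  - by move=> p /memD [U [-> _ _]]; apply: K5.
  - move=> A iA; exists (rho A, Zs (rho A)).
      apply: map_f; rewrite mem_enum inE rho_idem eqxx andbT.
      exact: indep_sub (rho_sub A) iA.
    by rewrite /inI /= rho_sub K4.
  - move=> A p q /memD [U [-> _ rU]] /memD [U' [-> _ rU']].
    rewrite /inI /= => /andP[h1 h2] /andP[h3 h4].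
    by rewrite -(K6 rU h1 h2) -(K6 rU' h3 h4).
  rewrite map_inj_uniq ?enum_uniq //; by move=> U U' [].
rewrite /stanley_reg big_map; apply/bigmax_leqP_seq => U; rewrite mem_enum inE.
by move=> /andP[_ /eqP rU] _; rewrite -rU card_rho.
Qed.

End Comb.

Theorem corollary5p11 (K : fieldType) (n : nat) (G : simple_graph n) (k : nat) :
  boxicity_le (gV G) (compl_adj G) k -> sreg_le K G k.
Proof.
move=> [k' [kk [l [r [Hlr Hbox]]]]].
have [HD Hreg] := Dlist_ok Hlr Hbox K.
by exists (Dlist G l r); split => //; apply: leq_trans Hreg kk.
Qed.
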